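(* Let $\Sigma=\Sigma_p\cup\Sigma_d$ be a finite propositional alphabet partitioned into parameter symbols $\Sigma_p$ and defined symbols $\Sigma_d$. For each $I\in 2^{\Sigma_p}$ let $\pi_I:L^d_p\to 2^{\Sigma_d}$ map $\mathcal{A}$ to $\mathcal{A}^I=\{a\in\Sigma_d\mid \psi_a^I=\mathbf{t}\text{ where }\mathcal{A}(a)=\overline{\psi_a}\}$. Then $L^d_p$ is a parametrisation of $\langle 2^{\Sigma_d},\subseteq\rangle$ through $(\pi_I)_{I\in 2^{\Sigma_p}}$.
   Context: $L_p$ is the set of equivalence classes $\overline\varphi$ (under logical equivalence) of propositional formulas over $\Sigma_p$, ordered by $\overline\varphi\leq\overline\psi$ iff $\varphi\models\psi$; it is a complete lattice. $L^d_p$ is the set of maps $\Sigma_d\to L_p$, ordered pointwise. A complete lattice $L$ is a parametrisation of a complete lattice $K$ through a family $(f_i:L\to K)_{i\in I}$ if each $f_i$ is a surjective lattice morphism (i.e. $f_i(\bigvee X)=\bigvee f_i(X)$ and $f_i(\bigwedge X)=\bigwedge f_i(X)$ for every $X\subseteq L$) and for all $x,y\in L$: $x\leq y$ iff $f_i(x)\leq f_i(y)$ for every $i\in I$. *)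

(* Defs.v *)
From HB Require Import structures.
From mathcomp Require Import all_boot generic_quotient.
Set Implicit Arguments. Unset Strict Implicit. Unset Printing Implicit Defensive.

Section OrderNotions.
Variables (L : Type) (le : L -> L -> Prop).

Definition is_lub (X : L -> Prop) (s : L) : Prop :=
  (forall x, X x -> le x s) /\ (forall u, (forall x, X x -> le x u) -> le s u).
Definition is_glb (X : L -> Prop) (s : L) : Prop :=
  (forall x, X x -> le s x) /\ (forall u, (forall x, X x -> le u x) -> le u s).

Definition complete_lattice : Prop :=
  [/\ (forall x, le x x),
      (forall x y, le x y -> le y x -> x = y),
      (forall x y z, le x y -> le y z -> le x z) &
      (forall X : L -> Prop, (exists s, is_lub X s) /\ (exists s, is_glb X s))].
End OrderNotions.

Definition image_pred {A B : Type} (f : A -> B) (X : A -> Prop) : B -> Prop :=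
  fun y => exists2 x, X x & y = f x.

Definition complete_lattice_morphism {L K : Type}
  (leL : L -> L -> Prop) (leK : K -> K -> Prop) (f : L -> K) : Prop :=
  forall X : L -> Prop,
    (forall s, is_lub leL X s -> is_lub leK (image_pred f X) (f s)) /\
    (forall s, is_glb leL X s -> is_glb leK (image_pred f X) (f s)).

Definition parametrisation {L K I : Type}
  (leL : L -> L -> Prop) (leK : K -> K -> Prop) (f : I -> L -> K) : Prop :=
  [/\ complete_lattice leL, complete_lattice leK,
      (forall i, (forall y : K, exists x : L, f i x = y) /\
                 complete_lattice_morphism leL leK (f i)) &
      (forall x y : L, leL x y <-> (forall i, leK (f i x) (f i y)))].

Inductive formula (P : Type) : Type :=
| Atom of P
| FTrue
| FFalse
| FNot of formula P
| FAnd of formula P & formula P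
| FOr of formula P & formula P
| FImp of formula P & formula P.
Arguments FTrue {P}. Arguments FFalse {P}.

Section Formulas.
Variable P : finType.

Fixpoint eval (I : {set P}) (f : formula P) : bool :=
  match f with
  | Atom p => p \in I
  | FTrue => true
  | FFalse => false
  | FNot g => ~~ eval I g
  | FAnd g h => eval I g && eval I h
  | FOr g h => eval I g || eval I h
  | FImp g h => eval I g ==> eval I h
  end.

Definition entails (f g : formula P) : bool := [forall I : {set P}, eval I f ==> eval I g].
Definition fequiv (f g : formula P) : bool := [forall I : {set P}, eval I f == eval I g].

Fixpoint enc (f : formula P) : GenTree.tree P :=
  match f with
  | Atom p => GenTree.Leaf p
  | FTrue => GenTree.Node 0 [::]
  | FFalse => GenTree.Node 1 [::]
  | FNot g => GenTree.Node 2 [:: enc g]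
  | FAnd g h => GenTree.Node 3 [:: enc g; enc h]
  | FOr g h => GenTree.Node 4 [:: enc g; enc h]
  | FImp g h => GenTree.Node 5 [:: enc g; enc h]
  end.

Fixpoint dec (t : GenTree.tree P) : option (formula P) :=
  match t with
  | GenTree.Leaf p => Some (Atom p)
  | GenTree.Node 0 [::] => Some FTrue
  | GenTree.Node 1 [::] => Some FFalse
  | GenTree.Node 2 [:: a] => omap (@FNot P) (dec a)
  | GenTree.Node 3 [:: a; b] =>
      if dec a is Some g then omap (FAnd g) (dec b) else None
  | GenTree.Node 4 [:: a; b] =>
      if dec a is Some g then omap (FOr g) (dec b) else None
  | GenTree.Node 5 [:: a; b] =>
      if dec a is Some g then omap (FImp g) (dec b) else None
  | _ => None
  end.

Lemma encK : pcancel enc dec.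
Proof. by elim=> //= [g -> | g -> h -> | g -> h -> | g -> h ->]. Qed.

End Formulas.

HB.instance Definition _ (P : finType) := Countable.copy (formula P) (pcan_type (@encK P)).

Section Quot.
Variable P : finType.

Lemma fequiv_refl : reflexive (@fequiv P).
Proof. by move=> f; apply/forallP. Qed.
Lemma fequiv_sym : symmetric (@fequiv P).
Proof.
by move=> f g; apply/forallP/forallP=> H I; rewrite eq_sym; apply: H.
Qed.
Lemma fequiv_trans : transitive (@fequiv P).
Proof.
move=> g f h /forallP H1 /forallP H2; apply/forallP=> I.
by rewrite (eqP (H1 I)) H2.
Qed.

Canonical fequiv_equiv := EquivRel (@fequiv P) fequiv_refl fequiv_sym fequiv_trans.

Definition Lp : Type := {eq_quot (@fequiv P)}%qT.

Definition Lp_le (x y : Lp) : Prop := entails (repr x) (repr y).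
End Quot.

Definition Ldp (P D : finType) : Type := D -> Lp P.
Definition Ldp_le (P D : finType) (A B : Ldp P D) : Prop :=
  forall a : D, Lp_le (A a) (B a).

Definition pi_map (P D : finType) (I : {set P}) (A : Ldp P D) : {set D} :=
  [set a | eval I (repr (A a))].

Definition subset_le (D : finType) (X Y : {set D}) : Prop := X \subset Y.

(* Main.v *)
Require Import Defs.
From mathcomp Require Import all_boot generic_quotient.
From Stdlib Require Import ClassicalDescription FunctionalExtensionality.
Set Implicit Arguments. Unset Strict Implicit. Unset Printing Implicit Defensive.

Local Open Scope quotient_scope.
Definition pb (Q : Prop) : bool := if excluded_middle_informative Q then true else false.
Lemma pbP (Q : Prop) : reflect Q (pb Q).
Proof. rewrite /pb; case: excluded_middle_informative => h; by constructor. Qed.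

Section Aux.
Variable P : finType.
Definition mods (x : Lp P) : {set {set P}} := [set I | eval I (repr x)].
Lemma evalE (x : Lp P) I : eval I (repr x) = (I \in mods x).
Proof. by rewrite inE. Qed.

Lemma pi_eval (f : formula P) I : eval I (repr (\pi_({eq_quot (@fequiv P)}) f)) = eval I f.
Proof.
have : fequiv (repr (\pi_({eq_quot (@fequiv P)}) f)) f.
  by apply/eqquotP; exact: reprK.
by move/forallP/(_ I)/eqP.
Qed.

Definition minterm (I : {set P}) : formula P :=
  foldr (fun p f => FAnd (if p \in I then Atom p else FNot (Atom p)) f) FTrue (enum P).
Lemma eval_minterm J I : eval J (minterm I) = (J == I).
Proof.
have -> : eval J (minterm I) = all (fun p => (p \in J) == (p \in I)) (enum P).
  rewrite /minterm; elim: (enum P) => //= p s ->.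
  by case: (p \in I) => /=; case: (p \in J).
apply/allP/eqP => [H|->]; last by move=> p _.
by apply/setP => p; apply/eqP/H; rewrite mem_enum.
Qed.

Definition char (S : {set {set P}}) : formula P :=
  foldr (fun I f => FOr (minterm I) f) FFalse (enum S).
Lemma eval_char J S : eval J (char S) = (J \in S).
Proof.
rewrite /char -mem_enum; elim: (enum S) => //= I s ->.
by rewrite eval_minterm in_cons.
Qed.

Definition mk (S : {set {set P}}) : Lp P := \pi_({eq_quot (@fequiv P)}) (char S).
Lemma mods_mk S : mods (mk S) = S.
Proof. by apply/setP => J; rewrite inE pi_eval eval_char. Qed.

Lemma mods_inj (x y : Lp P) : mods x = mods y -> x = y.
Proof.
move=> H; rewrite -[x]reprK -[y]reprK; apply/eqquotP; apply/forallP => I.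
by move/setP/(_ I): H; rewrite !inE => ->.
Qed.

Lemma le_mods (x y : Lp P) : Lp_le x y <-> mods x \subset mods y.
Proof.
split.
  move/forallP => H; apply/subsetP => I; rewrite !inE; apply/implyP/H.
move/subsetP => H; apply/forallP => I; apply/implyP => h.
by have := H I; rewrite !inE; apply.
Qed.
End Aux.

Theorem proposition4p6 (Sp Sd : finType) :
  parametrisation (@Ldp_le Sp Sd) (@subset_le Sd) (fun I : {set Sp} => @pi_map Sp Sd I).
Proof.
pose supL (X : Ldp Sp Sd -> Prop) : Ldp Sp Sd :=
  fun a => mk [set I | pb (exists A, X A /\ I \in mods (A a))].
pose infL (X : Ldp Sp Sd -> Prop) : Ldp Sp Sd :=
  fun a => mk [set I | pb (forall A, X A -> I \in mods (A a))].
have antis : forall x y : Ldp Sp Sd, Ldp_le x y -> Ldp_le y x -> x = y.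
  move=> x y H1 H2; apply: functional_extensionality => a; apply: mods_inj.
  by apply/eqP; rewrite eqEsubset; apply/andP; split; apply/le_mods.
have supP : forall X, is_lub (@Ldp_le Sp Sd) X (supL X).
  move=> X; split.
    move=> A HA a; apply/le_mods; rewrite mods_mk; apply/subsetP => I HI.
    by rewrite inE; apply/pbP; exists A.
  move=> u Hu a; apply/le_mods; rewrite mods_mk; apply/subsetP => I.
  rewrite inE => /pbP [A [HA HI]].
  by have /le_mods/subsetP := Hu A HA a; apply.
have infP : forall X, is_glb (@Ldp_le Sp Sd) X (infL X).
  move=> X; split.
    move=> A HA a; apply/le_mods; rewrite mods_mk; apply/subsetP => I.
    by rewrite inE => /pbP; apply.
  move=> u Hu a; apply/le_mods; rewrite mods_mk; apply/subsetP => I HI.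
  rewrite inE; apply/pbP => A HA.
  by have /le_mods/subsetP := Hu A HA a; apply.
have lubU : forall X s, is_lub (@Ldp_le Sp Sd) X s -> s = supL X.
  move=> X s [H1 H2]; have [H3 H4] := supP X.
  by apply: antis; [apply: H2 | apply: H4].
have glbU : forall X s, is_glb (@Ldp_le Sp Sd) X s -> s = infL X.
  move=> X s [H1 H2]; have [H3 H4] := infP X.
  by apply: antis; [apply: H4 | apply: H2].
split.
- split.
  + by move=> x a; apply/le_mods.
  + exact: antis.
  + move=> x y z H1 H2 a; apply/le_mods; apply: subset_trans.
      by apply/le_mods; apply: H1.
    by apply/le_mods; apply: H2.
  + move=> X; split; [exists (supL X) | exists (infL X)]; by [].
- split.
  + by move=> x; apply: subxx.
  + by move=> x y a b; apply/eqP; rewrite eqEsubset a b.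
  + by move=> x y z; apply: subset_trans.
  + move=> X; split.
      exists [set a | pb (exists Y, X Y /\ a \in Y)]; split.
        move=> Y HY; apply/subsetP => a aY; rewrite inE; apply/pbP; by exists Y.
      move=> u Hu; apply/subsetP => a; rewrite inE => /pbP [Y [HY aY]].
      exact: (subsetP (Hu Y HY) a aY).
    exists [set a | pb (forall Y, X Y -> a \in Y)]; split.
      move=> Y HY; apply/subsetP => a; rewrite inE => /pbP; by apply.
    move=> u Hu; apply/subsetP => a au; rewrite inE; apply/pbP => Y HY.
    exact: (subsetP (Hu Y HY) a au).
- move=> I; split.
    move=> Y; exists (fun a => mk (if a \in Y then setT else set0)).
    apply/setP => a; rewrite inE evalE mods_mk.
    by case: (a \in Y); rewrite ?inE.
  move=> X; split.
    move=> s /lubU ->; split.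
      move=> Y [A HA ->]; apply/subsetP => a; rewrite !inE !evalE mods_mk !inE => HI.
      by apply/pbP; exists A; split; rewrite // inE.
    move=> u Hu; apply/subsetP => a; rewrite inE evalE mods_mk !inE => /pbP [A [HA HI]].
    apply: (subsetP (Hu _ (ex_intro2 _ _ A HA erefl))).
    by rewrite inE evalE.
  move=> s /glbU ->; split.
    move=> Y [A HA ->]; apply/subsetP => a; rewrite !inE !evalE mods_mk !inE => /pbP H.
    by have := H A HA; rewrite inE.
  move=> u Hu; apply/subsetP => a au; rewrite inE evalE mods_mk !inE; apply/pbP => A HA.
  by have := subsetP (Hu _ (ex_intro2 _ _ A HA erefl)) a au; rewrite inE evalE.
- move=> x y; split.
    move=> H I; apply/subsetP => a; rewrite !inE !evalE.
    by move: (H a) => /le_mods /subsetP; apply.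
  move=> H a; apply/le_mods/subsetP => I.
  by have := subsetP (H I) a; rewrite !inE !evalE.
Qed.
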